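(* Let the problem, the cone $\mathcal{C}$ and the algorithm $\widetilde A$ be as in the context. Then: - $\widetilde A\in\mathcal{A}(\mathcal{C})$. - For every $f\in\mathcal{C}$ and $\varepsilon>0$, $\mathrm{cost}(\widetilde A,f,\varepsilon)=n_{j^*}$, where $j^*=\min\{j\in\mathbb{N}:\sigma_j(f)\le\varepsilon\sqrt{1-b^2}/(ab)\}$. - For all $\varepsilon,\rho>0$, $\mathrm{cost}(\widetilde A,\mathcal{C},\varepsilon,\rho)\le n_{j^\dagger}$ for some positive integer $j^\dagger$ satisfying $$j^\dagger\le\min\Big\{j\in\mathbb{N}:\frac{\rho^2}{\varepsilon^2}\le\frac{1-b^2}{a^2b^2}\Big[\sum_{k=1}^{j-1}\frac{b^{2(k-j)}}{a^2\lambda_{n_{k-1}+1}^2}+\frac{1}{\lambda_{n_{j-1}+1}^2}\Big]\Big\}.$$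
   Context: Let $\mathcal{F}$ and $\mathcal{G}$ be separable Hilbert spaces with orthonormal bases $(u_i)_{i\in\mathbb{N}}$ and $(v_i)_{i\in\mathbb{N}}$. Write $f=\sum_i\widehat f_iu_i$ with $\|f\|_{\mathcal{F}}=\|(\widehat f_i)_i\|_{\ell^2}$, and similarly for $\mathcal{G}$. Let $S:\mathcal{F}\to\mathcal{G}$ be the linear operator $S(f)=\sum_i\lambda_i\widehat f_iv_i$, where $\lambda_1\ge\lambda_2\ge\cdots>0$ and $\lambda_i\to0$. For $n\ge0$ let $A_n(f)=\sum_{i=1}^n\lambda_i\widehat f_iv_i$; it uses the $n$ values $\widehat f_1,\dots,\widehat f_n$. Let $\mathcal{B}_\rho=\{f:\|f\|_{\mathcal{F}}\le\rho\}$. For $\mathcal{H}\subseteq\mathcal{F}$, $\mathcal{A}(\mathcal{H})$ is the set of deterministic algorithms $A:\mathcal{H}\times(0,\infty)\to\mathcal{G}$, adaptively sampling finitely many bounded linear functionals of the input, with $\|S(f)-A(f,\varepsilon)\|_{\mathcal{G}}\le\varepsilon$ for all $f\in\mathcal{H}$ and all $\varepsilon>0$. $\mathrm{cost}(A,f,\varepsilon)$ is the number of linear functional values used to compute $A(f,\varepsilon)$, and $\mathrm{cost}(A,\mathcal{H},\varepsilon,\rho)=\sup\{\mathrm{cost}(A,f,\varepsilon):f\in\mathcal{H}\cap\mathcal{B}_\rho\}$. Let $n_0<n_1<n_2<\cdots$ be a strictly increasing, unbounded sequence of non-negative integers. For $j\in\mathbb{N}=\{1,2,\dots\}$ let $\sigma_j(f)=\|(\lambda_i\widehat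 f_i)_{i=n_{j-1}+1}^{n_j}\|_{\ell^2}$. Fix constants $0<b<1<a$ and define the cone $$\mathcal{C}=\{f\in\mathcal{F}:\sigma_{j+r}(f)\le ab^r\sigma_j(f)\ \forall j,r\in\mathbb{N}\}.$$ The algorithm $\widetilde A$ works as follows. Given $f\in\mathcal{C}$ and $\varepsilon>0$, for $j=1,2,\dots$ it computes $\sigma_j(f)$. At the first $j$ with $\sigma_j(f)\le\varepsilon\sqrt{1-b^2}/(ab)$, it returns $\widetilde A(f,\varepsilon)=A_{n_j}(f)$. *)

(* Defs.v *)
From Stdlib Require Import Reals Lra Lia List Arith.
From Coquelicot Require Import Coquelicot.
Open Scope R_scope.

(* Conventions: an element f of F (resp. G) is represented by
   its coefficient sequence fh : nat -> R w.r.t. the orthonormal basis, indexed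
   from 0 (paper index i corresponds to index i-1 here).  Bounded linear
   functionals on F are represented (Riesz) by sequences l in l^2, acting by
   L(f) = sum_i l_i fh_i. *)

Definition in_l2 (fh : nat -> R) : Prop := ex_series (fun i => fh i ^ 2).
Definition l2norm (fh : nat -> R) : R := sqrt (Series (fun i => fh i ^ 2)).

Definition dist_le (g h : nat -> R) (eps : R) : Prop :=
  in_l2 (fun i => g i - h i) /\ l2norm (fun i => g i - h i) <= eps.

(* The solution operator S(f) = sum_i lambda_i fh_i v_i. *)
Definition Sop (lam : nat -> R) (fh : nat -> R) : nat -> R :=
  fun i => lam i * fh i.

Definition apply_fun (l fh : nat -> R) : R := Series (fun i => l i * fh i).

(* At each step, given eps and the list of values observed so far, the
   algorithm either queries a further linear functional or stops with an
   output in G. *)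
Inductive action : Type :=
  | Query : (nat -> R) -> action
  | Stop  : (nat -> R) -> action.

Definition algorithm := R -> list R -> action.

Fixpoint obs (A : algorithm) (fh : nat -> R) (eps : R) (k : nat) : list R :=
  match k with
  | O => nil
  | S k' =>
      let o := obs A fh eps k' in
      match A eps o with
      | Query l => o ++ (apply_fun l fh :: nil)
      | Stop _ => o
      end
  end.

Definition bounded_query (act : action) : Prop :=
  exists l, act = Query l /\ in_l2 l.

(* A, on input (f, eps), queries exactly k bounded linear functionals
   (so cost(A, f, eps) = k) and then returns g. *)
Definition halts_with (A : algorithm) (fh : nat -> R) (eps : R) (k : nat)
  (g : nat -> R) : Prop :=
  (forall k', (k' < k)%nat -> bounded_query (A eps (obs A fh eps k'))) /\
  A eps (obs A fh eps k) = Stop g.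

Definition in_alg_class (lam : nat -> R) (A : algorithm) (H : (nat -> R) -> Prop)
  : Prop :=
  forall fh, H fh -> forall eps, 0 < eps ->
    exists k g, halts_with A fh eps k g /\ dist_le (Sop lam fh) g eps.

(* sigma_j(f), j >= 1: l2 norm of (lambda_i fh_i) for paper indices
   n_{j-1}+1 .. n_j, i.e. 0-based indices n_{j-1} .. n_j - 1. *)
Definition sigma_blk (lam : nat -> R) (n : nat -> nat) (fh : nat -> R) (j : nat) : R :=
  sqrt (sum_n_m (fun i => (lam i * fh i) ^ 2) (n (j - 1)%nat) (Nat.pred (n j))).

Definition cone (lam : nat -> R) (n : nat -> nat) (a b : R) (fh : nat -> R) : Prop :=
  in_l2 fh /\
  forall j r : nat, (1 <= j)%nat -> (1 <= r)%nat ->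
    sigma_blk lam n fh (j + r) <= a * b ^ r * sigma_blk lam n fh j.

Definition thr (a b eps : R) : R := eps * sqrt (1 - b ^ 2) / (a * b).

Fixpoint search_blk (n : nat -> nat) (m k : nat) : option nat :=
  match k with
  | O => None
  | S k' => if Nat.eqb (n (S k')) m then Some (S k') else search_blk n m k'
  end.

(* Some j iff m = n_j for some j >= 1 (necessarily j <= m as n is strictly
   increasing). *)
Definition block_end (n : nat -> nat) (m : nat) : option nat := search_blk n m m.

Definition coord (m : nat) : nat -> R := fun i => if Nat.eqb i m then 1 else 0.

(* The algorithm A~: it queries hat f_1, hat f_2, ... in order; whenever the
   number of observed values equals n_j (j >= 1) it computes sigma_j and stops
   with A_{n_j}(f) if sigma_j <= eps sqrt(1-b^2)/(ab). *)
Definition Atilde (lam : nat -> R) (n : nat -> nat) (a b : R) : algorithm :=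
  fun eps o =>
    let m := length o in
    let v := fun i => nth i o 0 in
    match block_end n m with
    | Some j =>
        if Rle_dec (sigma_blk lam n v j) (thr a b eps)
        then Stop (fun i => if Nat.ltb i m then lam i * v i else 0)
        else Query (coord m)
    | None => Query (coord m)
    end.

(* bracket in the bound for j^dagger:
   (1-b^2)/(a^2 b^2) [ sum_{k=1}^{j-1} b^{2(k-j)} / (a^2 lambda_{n_{k-1}+1}^2)
                       + 1/lambda_{n_{j-1}+1}^2 ]   (paper's 1-based lambda) *)
Definition jdag_rhs (lam : nat -> R) (n : nat -> nat) (a b : R) (j : nat) : R :=
  (1 - b ^ 2) / (a ^ 2 * b ^ 2) *
  (sum_n_m (fun k => powerRZ b (2 * (Z.of_nat k - Z.of_nat j))
                       / (a ^ 2 * lam (n (k - 1)%nat) ^ 2)) 1 (j - 1)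
   + 1 / lam (n (j - 1)%nat) ^ 2).

(* Main.v *)
Require Import Defs.
From Stdlib Require Import Reals Lra Lia List Arith Classical FunctionalExtensionality.
From Coquelicot Require Import Coquelicot.
Open Scope R_scope.

Lemma Rplus_plus (x y : R) : plus x y = x + y.
Proof. reflexivity. Qed.
Lemma zero_R : (zero : R) = 0.
Proof. reflexivity. Qed.

Lemma sum_n_m_nonneg (f : nat -> R) p q : (forall i, 0 <= f i) -> 0 <= sum_n_m f p q.
Proof.
  intros H. destruct (le_lt_dec p q) as [Hl|Hl].
  - induction q. 
    + assert (p = 0%nat) by lia. subst. rewrite sum_n_n. apply H.
    + destruct (Nat.eq_dec p (S q)). subst. rewrite sum_n_n; apply H.
      rewrite sum_n_Sm by lia. rewrite Rplus_plus. specialize (IHq ltac:(lia)). specialize (H (S q)). lra.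
  - rewrite sum_n_m_zero by lia. rewrite zero_R; lra.
Qed.

Lemma sum_n_m_Chasles_R (f : nat -> R) p q r :
  (p <= S q)%nat -> (q <= r)%nat -> sum_n_m f p r = sum_n_m f p q + sum_n_m f (S q) r.
Proof. intros. rewrite (sum_n_m_Chasles f p q r) by lia. reflexivity. Qed.

Lemma sum_n_mono (f : nat -> R) N M : (forall i, 0 <= f i) -> (N <= M)%nat -> sum_n f N <= sum_n f M.
Proof.
  intros H HNM. unfold sum_n. destruct (Nat.eq_dec N M). subst; lra.
  rewrite (sum_n_m_Chasles_R f 0 N M) by lia.
  pose proof (sum_n_m_nonneg f (S N) M H). lra.
Qed.

Lemma sum_le_Series (f : nat -> R) N : (forall i, 0 <= f i) -> ex_series f -> sum_n f N <= Series f.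
Proof.
  intros H He. apply Series_correct in He.
  apply (is_lim_seq_incr_compare (sum_n f) (Series f)).
  - exact He.
  - intros k. apply sum_n_mono; auto.
Qed.

Lemma Series_le_bound (f : nat -> R) B : ex_series f -> (forall N, sum_n f N <= B) -> Series f <= B.
Proof.
  intros He HB. apply Series_correct in He.
  assert (Hl := is_lim_seq_le (sum_n f) (fun _ => B) (Series f) B HB He (is_lim_seq_const B)).
  exact Hl.
Qed.

Lemma sum_bump (c : R) m N :
  sum_n (fun i => if Nat.eqb i m then c else 0) N = if Nat.leb m N then c else 0.
Proof.
  unfold sum_n. induction N.
  - rewrite sum_n_n. destruct m; simpl; reflexivity.
  - rewrite sum_n_Sm by lia. rewrite Rplus_plus, IHN.
    destruct (Nat.eqb_spec (S N) m); destruct (Nat.leb_spec m N); destruct (Nat.leb_spec m (S N)); try lia; lra.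
Qed.

Lemma is_series_bump (c : R) m : is_series (fun i => if Nat.eqb i m then c else 0) c.
Proof.
  assert (H : is_lim_seq (sum_n (fun i => if Nat.eqb i m then c else 0)) c).
  2: exact H.
  apply (is_lim_seq_ext_loc (fun _ => c)).
  - exists m. intros N HN. rewrite sum_bump. destruct (Nat.leb_spec m N); [reflexivity| lia].
  - apply is_lim_seq_const.
Qed.

Lemma apply_coord m fh : apply_fun (coord m) fh = fh m.
Proof.
  unfold apply_fun. rewrite (Series_ext _ (fun i => if Nat.eqb i m then fh m else 0)).
  - apply is_series_unique, is_series_bump.
  - intros i. unfold coord. destruct (Nat.eqb_spec i m); subst; ring.
Qed.

Lemma coord_l2 m : in_l2 (coord m).
Proof.
  unfold in_l2. exists 1. eapply is_series_ext; [|apply (is_series_bump 1 m)].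
  intros i. unfold coord. destruct (Nat.eqb i m); simpl; ring.
Qed.

Lemma n_lt (n : nat -> nat) (Hn : forall j, (n j < n (S j))%nat) i j : (i < j)%nat -> (n i < n j)%nat.
Proof. intros H. induction H. apply Hn. specialize (Hn m). lia. Qed.
Lemma n_le (n : nat -> nat) (Hn : forall j, (n j < n (S j))%nat) i j : (i <= j)%nat -> (n i <= n j)%nat.
Proof. intros H. destruct (Nat.eq_dec i j). subst; lia. pose proof (n_lt n Hn i j). lia. Qed.
Lemma n_lt_rev (n : nat -> nat) (Hn : forall j, (n j < n (S j))%nat) i j : (n i < n j)%nat -> (i < j)%nat.
Proof. intros H. destruct (le_lt_dec j i); auto. pose proof (n_le n Hn j i l). lia. Qed.
Lemma n_ge (n : nat -> nat) (Hn : forall j, (n j < n (S j))%nat) j : (j <= n j)%nat.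
Proof. induction j. lia. specialize (Hn j). lia. Qed.
Lemma lam_mono (lam : nat -> R) (Hlam_dec : forall i, lam (S i) <= lam i) i j : (i <= j)%nat -> lam j <= lam i.
Proof. intros H. induction H. lra. specialize (Hlam_dec m). lra. Qed.

Lemma search_some n m k j : search_blk n m k = Some j -> n j = m /\ (1 <= j <= k)%nat.
Proof.
  induction k; simpl. discriminate.
  destruct (Nat.eqb_spec (n (S k)) m). intros H; inversion H; subst. split; auto; lia.
  intros H. destruct (IHk H). split; auto; lia.
Qed.
Lemma search_none n m k : search_blk n m k = None -> forall j, (1 <= j <= k)%nat -> n j <> m.
Proof.
  induction k; simpl. intros; lia.
  destruct (Nat.eqb_spec (n (S k)) m). discriminate.
  intros H j Hj. destruct (Nat.eq_dec j (S k)). subst; auto. apply IHk; auto; lia.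
Qed.
Lemma block_end_some (n : nat -> nat) m j : block_end n m = Some j -> n j = m /\ (1 <= j)%nat.
Proof. unfold block_end. intros H. destruct (search_some _ _ _ _ H). split; auto; lia. Qed.
Lemma block_end_nj (n : nat -> nat) (Hn : forall j, (n j < n (S j))%nat) j : (1 <= j)%nat -> block_end n (n j) = Some j.
Proof.
  intros Hj. destruct (block_end n (n j)) eqn:E.
  - apply block_end_some in E. destruct E as [E _].
    destruct (lt_eq_lt_dec n0 j) as [[H|H]|H]; auto.
    + pose proof (n_lt n Hn _ _ H). lia.
    + pose proof (n_lt n Hn _ _ H). lia.
  - exfalso. unfold block_end in E. eapply (search_none _ _ _ E j); auto.
    pose proof (n_ge n Hn j). lia.
Qed.

Definition Lfh (fh : nat -> R) (k : nat) : list R := map fh (seq 0 k).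

Lemma Lfh_len fh k : length (Lfh fh k) = k.
Proof. unfold Lfh. rewrite length_map, length_seq. reflexivity. Qed.

Lemma Lfh_nth fh k i : (i < k)%nat -> nth i (Lfh fh k) 0 = fh i.
Proof.
  intros H. unfold Lfh. rewrite (nth_indep _ _ (fh 0%nat)) by (rewrite length_map, length_seq; auto).
  rewrite map_nth, seq_nth by auto. reflexivity.
Qed.

Lemma Lfh_S fh k : Lfh fh (S k) = Lfh fh k ++ (fh k :: nil).
Proof. unfold Lfh. rewrite seq_S, map_app. reflexivity. Qed.

Lemma sigma_obs lam (n : nat -> nat) (Hn : forall j, (n j < n (S j))%nat) fh j k : (1 <= j)%nat -> n j = k ->
  sigma_blk lam n (fun i => nth i (Lfh fh k) 0) j = sigma_blk lam n fh j.
Proof.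
  intros Hj Hk. unfold sigma_blk. f_equal. apply sum_n_m_ext_loc.
  intros i Hi. rewrite Lfh_nth; auto. pose proof (Hn (j-1)%nat). replace (S (j-1)) with j in H by lia. lia.
Qed.

Lemma step_query (lam : nat -> R) (n : nat -> nat) (a b : R) (Hn : forall j, (n j < n (S j))%nat) fh eps J
  (HJmin : forall j, (1 <= j < J)%nat -> thr a b eps < sigma_blk lam n fh j) k :
  (k < n J)%nat -> Atilde lam n a b eps (Lfh fh k) = Query (coord k).
Proof.
  intros Hk. unfold Atilde. cbv beta zeta. rewrite Lfh_len.
  destruct (block_end n k) eqn:E; auto.
  apply block_end_some in E. destruct E as [E1 E2].
  rewrite sigma_obs; auto.
  destruct (Rle_dec (sigma_blk lam n fh n0) (thr a b eps)) as [H|H]; auto.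
  exfalso. assert (n0 < J)%nat by (apply (n_lt_rev n Hn); lia).
  specialize (HJmin n0 ltac:(lia)). lra.
Qed.

Definition gout (lam : nat -> R) (n : nat -> nat) (fh : nat -> R) (J : nat) : nat -> R :=
  fun i => if Nat.ltb i (n J) then lam i * nth i (Lfh fh (n J)) 0 else 0.

Lemma step_stop (lam : nat -> R) (n : nat -> nat) (a b : R) (Hn : forall j, (n j < n (S j))%nat) fh eps J (HJ1 : (1 <= J)%nat)
  (HJle : sigma_blk lam n fh J <= thr a b eps) :
  Atilde lam n a b eps (Lfh fh (n J)) = Stop (gout lam n fh J).
Proof.
  unfold Atilde. cbv beta zeta. rewrite Lfh_len.
  rewrite block_end_nj; auto. rewrite sigma_obs; auto.
  destruct (Rle_dec (sigma_blk lam n fh J) (thr a b eps)) as [H|H]; [reflexivity|lra].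
Qed.

Lemma obs_eq (lam : nat -> R) (n : nat -> nat) (a b : R) (Hn : forall j, (n j < n (S j))%nat) fh eps J
  (HJmin : forall j, (1 <= j < J)%nat -> thr a b eps < sigma_blk lam n fh j) k :
  (k <= n J)%nat -> obs (Atilde lam n a b) fh eps k = Lfh fh k.
Proof.
  induction k; intros Hk. reflexivity.
  simpl. rewrite IHk by lia. rewrite (step_query lam n a b Hn fh eps J HJmin) by lia.
  rewrite apply_coord, Lfh_S. reflexivity.
Qed.

Lemma halts_J (lam : nat -> R) (n : nat -> nat) (a b : R) (Hn : forall j, (n j < n (S j))%nat) fh eps J (HJ1 : (1 <= J)%nat)
  (HJle : sigma_blk lam n fh J <= thr a b eps)
  (HJmin : forall j, (1 <= j < J)%nat -> thr a b eps < sigma_blk lam n fh j) :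
  halts_with (Atilde lam n a b) fh eps (n J) (gout lam n fh J).
Proof.
  split.
  - intros k Hk. rewrite (obs_eq lam n a b Hn fh eps J HJmin) by lia.
    rewrite (step_query lam n a b Hn fh eps J HJmin) by lia.
    exists (coord k). split; auto. apply coord_l2.
  - rewrite (obs_eq lam n a b Hn fh eps J HJmin) by lia. apply step_stop; auto.
Qed.

Lemma halts_unique (lam : nat -> R) (n : nat -> nat) (a b : R) (Hn : forall j, (n j < n (S j))%nat) fh eps J (HJ1 : (1 <= J)%nat)
  (HJle : sigma_blk lam n fh J <= thr a b eps)
  (HJmin : forall j, (1 <= j < J)%nat -> thr a b eps < sigma_blk lam n fh j) k g :
  halts_with (Atilde lam n a b) fh eps k g -> k = n J.
Proof.
  intros [H1 H2]. pose proof (halts_J lam n a b Hn fh eps J HJ1 HJle HJmin) as [K1 K2].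
  destruct (lt_eq_lt_dec k (n J)) as [[H|H]|H]; auto.
  - destruct (K1 k H) as [l [E _]]. rewrite E in H2. discriminate.
  - destruct (H1 (n J) H) as [l [E _]]. rewrite E in K2. discriminate.
Qed.

Lemma pow_sq (b : R) r : (b ^ r) ^ 2 = (b ^ 2) ^ r.
Proof. rewrite <- !pow_mult. f_equal. lia. Qed.

Lemma sigma_nonneg lam n fh j : 0 <= sigma_blk lam n fh j.
Proof. apply sqrt_pos. Qed.

Lemma sigma_sq lam n fh j : sigma_blk lam n fh j ^ 2 = sum_n_m (fun i => (lam i * fh i) ^ 2) (n (j - 1)%nat) (Nat.pred (n j)).
Proof. unfold sigma_blk. apply pow2_sqrt. apply sum_n_m_nonneg. intros; apply pow2_ge_0. Qed.

Lemma sq_le x y : 0 <= x -> x <= y -> x ^ 2 <= y ^ 2.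
Proof. intros. nra. Qed.

Lemma tail_bound (lam : nat -> R) (n : nat -> nat) (a b : R) (Hn : forall j, (n j < n (S j))%nat)
  (Hb0 : 0 < b) (Hb1 : b < 1) (Ha : 1 < a) fh (Hc : cone lam n a b fh) J (HJ1 : (1 <= J)%nat) r :
  sum_n_m (fun i => (lam i * fh i) ^ 2) (n J) (Nat.pred (n (J + r)%nat))
  <= a ^ 2 * sigma_blk lam n fh J ^ 2 * ((b ^ 2 - (b ^ 2) ^ (S r)) / (1 - b ^ 2)).
Proof.
  assert (Hq : 0 < 1 - b ^ 2) by nra.
  induction r.
  - rewrite Nat.add_0_r. rewrite sum_n_m_zero. 2:{ pose proof (Hn 0%nat). pose proof (n_lt n Hn 0 J ltac:(lia)). lia. }
    rewrite zero_R, pow_1. unfold Rminus at 1. rewrite Rplus_opp_r. unfold Rdiv. rewrite Rmult_0_l, Rmult_0_r. lra.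
  - pose proof (n_lt n Hn (J + r) (J + S r) ltac:(lia)).
    pose proof (n_lt n Hn 0 (J + r) ltac:(lia)).
    rewrite (sum_n_m_Chasles_R _ (n J) (Nat.pred (n (J + r)%nat))) by (try pose proof (n_le n Hn J (J+r) ltac:(lia)); lia).
    assert (E1 : S (Nat.pred (n (J + r)%nat)) = n ((J + S r) - 1)%nat) by (replace ((J + S r) - 1)%nat with (J + r)%nat by lia; lia). rewrite E1.
    rewrite <- sigma_sq.
    destruct Hc as [_ Hc]. specialize (Hc J (S r) HJ1 ltac:(lia)).
    pose proof (sigma_nonneg lam n fh (J + S r)). pose proof (sigma_nonneg lam n fh J).
    pose proof (sq_le _ _ H1 Hc) as Hs.
    replace ((a * b ^ S r * sigma_blk lam n fh J) ^ 2) with (a ^ 2 * sigma_blk lam n fh J ^ 2 * (b ^ S r) ^ 2) in Hs by ring.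
    rewrite pow_sq in Hs.
    assert (E : (b ^ 2 - (b ^ 2) ^ S (S r)) / (1 - b ^ 2) = (b ^ 2 - (b ^ 2) ^ S r) / (1 - b ^ 2) + (b ^ 2) ^ S r).
    { change ((b ^ 2) ^ S (S r)) with (b ^ 2 * (b ^ 2) ^ S r). field. lra. }
    rewrite E. nra.
Qed.

Lemma geom_le (b : R) R : 0 < b -> b < 1 -> (b ^ 2 - (b ^ 2) ^ (S R)) / (1 - b ^ 2) <= b ^ 2 / (1 - b ^ 2).
Proof.
  intros. assert (0 < 1 - b ^ 2) by nra. assert (0 <= (b ^ 2) ^ S R) by (apply pow_le; nra).
  unfold Rdiv. apply Rmult_le_compat_r. left; apply Rinv_0_lt_compat; lra. lra.
Qed.

Definition dd (lam : nat -> R) (n : nat -> nat) (fh : nat -> R) (J : nat) : nat -> R :=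
  fun i => if Nat.ltb i (n J) then 0 else lam i * fh i.

Lemma err_bound (lam : nat -> R) (n : nat -> nat) (a b : R)
  (Hlam_pos : forall i, 0 < lam i) (Hlam_dec : forall i, lam (S i) <= lam i)
  (Hn : forall j, (n j < n (S j))%nat)
  (Hb0 : 0 < b) (Hb1 : b < 1) (Ha : 1 < a) fh (Hc : cone lam n a b fh) eps (Heps : 0 < eps)
  J (HJ1 : (1 <= J)%nat) (HJle : sigma_blk lam n fh J <= thr a b eps) :
  dist_le (Sop lam fh) (gout lam n fh J) eps.
Proof.
  assert (Hq : 0 < 1 - b ^ 2) by nra.
  assert (E : (fun i => Sop lam fh i - gout lam n fh J i) = dd lam n fh J).
  { apply functional_extensionality. intros i. unfold Sop, gout, dd.
    destruct (Nat.ltb_spec i (n J)). rewrite Lfh_nth by auto. ring. ring. }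
  unfold dist_le. rewrite E.
  assert (Hex : in_l2 (dd lam n fh J)).
  { unfold in_l2. apply (@ex_series_le R_AbsRing R_CompleteNormedModule _ (fun i => lam 0%nat ^ 2 * fh i ^ 2)).
    - intros i. change (norm (dd lam n fh J i ^ 2)) with (Rabs (dd lam n fh J i ^ 2)).
      rewrite Rabs_right by (apply Rle_ge, pow2_ge_0). unfold dd.
      pose proof (lam_mono lam Hlam_dec 0 i ltac:(lia)). pose proof (Hlam_pos i).
      destruct (Nat.ltb i (n J)). simpl. pose proof (pow2_ge_0 (fh i)). pose proof (pow2_ge_0 (lam 0%nat)). nra.
      assert (lam i ^ 2 <= lam 0%nat ^ 2) by nra. pose proof (pow2_ge_0 (fh i)).
      replace ((lam i * fh i) ^ 2) with (lam i ^ 2 * fh i ^ 2) by ring. nra.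
    - apply (ex_series_scal_l (lam 0%nat ^ 2) (fun i => fh i ^ 2)). apply Hc. }
  split; auto.
  unfold l2norm.
  assert (HS : Series (fun i => dd lam n fh J i ^ 2) <= eps ^ 2).
  { apply Series_le_bound; auto.
    intros N.
    pose proof (n_ge n Hn (J + S N)).
    pose proof (n_lt n Hn 0 J ltac:(lia)).
    pose proof (n_le n Hn J (J + S N) ltac:(lia)).
    eapply Rle_trans. apply (sum_n_mono _ N (Nat.pred (n (J + S N)%nat))). intros; apply pow2_ge_0. lia.
    unfold sum_n. rewrite (sum_n_m_Chasles_R _ 0 (Nat.pred (n J))) by lia.
    replace (S (Nat.pred (n J))) with (n J) by lia.
    rewrite (sum_n_m_ext_loc _ (fun _ => zero) 0 (Nat.pred (n J))).
    2:{ intros k Hk. unfold dd. destruct (Nat.ltb_spec k (n J)); [|lia]. simpl. rewrite zero_R; ring. }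
    rewrite sum_n_m_const_zero, zero_R, Rplus_0_l.
    rewrite (sum_n_m_ext_loc _ (fun i => (lam i * fh i) ^ 2)).
    2:{ intros k Hk. unfold dd. destruct (Nat.ltb_spec k (n J)); [lia|]. reflexivity. }
    eapply Rle_trans. apply (tail_bound lam n a b Hn Hb0 Hb1 Ha fh Hc J HJ1 (S N)).
    pose proof (geom_le b (S N) Hb0 Hb1).
    pose proof (sigma_nonneg lam n fh J) as Hs0.
    assert (Hth : a * b * sigma_blk lam n fh J <= eps * sqrt (1 - b ^ 2)).
    { unfold thr in HJle. apply (Rmult_le_compat_l (a * b)) in HJle; [|nra].
      replace (a * b * (eps * sqrt (1 - b ^ 2) / (a * b))) with (eps * sqrt (1 - b ^ 2)) in HJle by (field; nra). lra. }
    pose proof (sqrt_pos (1 - b ^ 2)).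
    assert (Hp : 0 <= a * b * sigma_blk lam n fh J) by (apply Rmult_le_pos; [nra|auto]).
    pose proof (sq_le _ _ Hp Hth) as Hth2.
    replace ((eps * sqrt (1 - b ^ 2)) ^ 2) with (eps ^ 2 * sqrt (1 - b ^ 2) ^ 2) in Hth2 by ring.
    rewrite pow2_sqrt in Hth2 by lra.
    assert (a ^ 2 * sigma_blk lam n fh J ^ 2 * (b ^ 2 / (1 - b ^ 2)) <= eps ^ 2).
    { replace (a ^ 2 * sigma_blk lam n fh J ^ 2 * (b ^ 2 / (1 - b ^ 2))) with ((a * b * sigma_blk lam n fh J) ^ 2 / (1 - b ^ 2)) by (field; lra).
      apply (Rmult_le_reg_r (1 - b ^ 2)); auto. unfold Rdiv. rewrite Rmult_assoc, Rinv_l by lra. lra. }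
    assert (0 <= a ^ 2 * sigma_blk lam n fh J ^ 2) by (pose proof (pow2_ge_0 a); pose proof (pow2_ge_0 (sigma_blk lam n fh J)); nra).
    nra. }
  rewrite <- (sqrt_pow2 eps) by lra. apply sqrt_le_1_alt. exact HS.
Qed.

Lemma nat_min (P : nat -> Prop) : (exists k, P k) -> exists k, P k /\ forall m, P m -> (k <= m)%nat.
Proof.
  intros [k Hk]. induction k as [k IH] using (well_founded_induction lt_wf).
  destruct (classic (exists m, (m < k)%nat /\ P m)) as [[m [Hm Pm]]|Hno].
  - exact (IH m Hm Pm).
  - exists k. split; auto. intros m Pm. destruct (le_lt_dec k m); auto. exfalso; apply Hno; eauto.
Qed.

Lemma thr_pos a b eps : 0 < b -> b < 1 -> 1 < a -> 0 < eps -> 0 < thr a b eps.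
Proof.
  intros. unfold thr. assert (0 < sqrt (1 - b ^ 2)) by (apply sqrt_lt_R0; nra).
  apply Rdiv_lt_0_compat; nra.
Qed.

Lemma exists_small (lam : nat -> R) (n : nat -> nat) (a b : R)
  (Hb0 : 0 < b) (Hb1 : b < 1) (Ha : 1 < a) fh (Hc : cone lam n a b fh) eps (Heps : 0 < eps) :
  exists j, (1 <= j)%nat /\ sigma_blk lam n fh j <= thr a b eps.
Proof.
  pose proof (thr_pos a b eps Hb0 Hb1 Ha Heps) as Ht.
  pose proof (sigma_nonneg lam n fh 1) as Hs. set (s := sigma_blk lam n fh 1) in *.
  destruct (pow_lt_1_zero b ltac:(rewrite Rabs_right; lra) (thr a b eps / (a * (s + 1)))) as [N HN].
  { apply Rdiv_lt_0_compat; auto. apply Rmult_lt_0_compat; lra. }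
  exists (1 + S N)%nat. split. lia.
  destruct Hc as [_ Hc]. specialize (Hc 1%nat (S N) ltac:(lia) ltac:(lia)).
  specialize (HN (S N) ltac:(lia)). rewrite Rabs_right in HN by (apply Rle_ge, pow_le; lra).
  pose proof (pow_le b (S N) ltac:(lra)).
  fold s in Hc.
  apply (Rmult_lt_compat_l (a * (s + 1))) in HN; [|apply Rmult_lt_0_compat; lra].
  replace (a * (s + 1) * (thr a b eps / (a * (s + 1)))) with (thr a b eps) in HN by (field; nra).
  nra.
Qed.

Lemma jstar_exists (lam : nat -> R) (n : nat -> nat) (a b : R)
  (Hb0 : 0 < b) (Hb1 : b < 1) (Ha : 1 < a) fh (Hc : cone lam n a b fh) eps (Heps : 0 < eps) :
  exists J, (1 <= J)%nat /\ sigma_blk lam n fh J <= thr a b eps /\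
    forall j, (1 <= j < J)%nat -> thr a b eps < sigma_blk lam n fh j.
Proof.
  destruct (nat_min (fun j => (1 <= j)%nat /\ sigma_blk lam n fh j <= thr a b eps)
     (exists_small lam n a b Hb0 Hb1 Ha fh Hc eps Heps)) as [J [[H1 H2] H3]].
  exists J. split; auto. split; auto. intros j Hj.
  destruct (Rle_dec (sigma_blk lam n fh j) (thr a b eps)) as [H|H].
  - specialize (H3 j (conj (proj1 Hj) H)). lia.
  - lra.
Qed.

Lemma sum_n_m_le_loc (f g : nat -> R) p q : (forall k, (p <= k <= q)%nat -> f k <= g k) -> sum_n_m f p q <= sum_n_m g p q.
Proof.
  intros H. destruct (le_lt_dec p q) as [Hl|Hl].
  - induction q.
    + assert (p = 0%nat) by lia. subst. rewrite !sum_n_n. apply H; lia.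
    + destruct (Nat.eq_dec p (S q)). subst. rewrite !sum_n_n; apply H; lia.
      rewrite !sum_n_Sm by lia. change (@plus R_AbelianMonoid ?x ?y) with (Rplus x y).
      assert (sum_n_m f p q <= sum_n_m g p q) by (apply IHq; intros; try apply H; lia).
      specialize (H (S q) ltac:(lia)). lra.
  - rewrite !sum_n_m_zero by lia. lra.
Qed.

Lemma block_lower (lam : nat -> R) (n : nat -> nat) (Hlam_pos : forall i, 0 < lam i)
  (Hlam_dec : forall i, lam (S i) <= lam i) fh k :
  sigma_blk lam n fh k ^ 2 / lam (n (k - 1)%nat) ^ 2
  <= sum_n_m (fun i => fh i ^ 2) (n (k - 1)%nat) (Nat.pred (n k)).
Proof.
  set (L := lam (n (k - 1)%nat)). pose proof (Hlam_pos (n (k-1)%nat)) as HL. fold L in HL.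
  rewrite sigma_sq.
  assert (sum_n_m (fun i => (lam i * fh i) ^ 2) (n (k - 1)%nat) (Nat.pred (n k))
          <= sum_n_m (fun i => L ^ 2 * fh i ^ 2) (n (k - 1)%nat) (Nat.pred (n k))).
  { apply sum_n_m_le_loc. intros i Hi. pose proof (lam_mono lam Hlam_dec _ _ (proj1 Hi)). fold L in H.
    pose proof (Hlam_pos i). pose proof (pow2_ge_0 (fh i)).
    replace ((lam i * fh i) ^ 2) with (lam i ^ 2 * fh i ^ 2) by ring.
    apply Rmult_le_compat_r; auto. nra. }
  rewrite (sum_n_m_mult_l (L ^ 2) (fun i => fh i ^ 2)) in H. change (mult (L ^ 2) ?x) with (L ^ 2 * x) in H.
  clearbody L.
  assert (HL2 : 0 < L ^ 2) by (apply pow_lt; exact HL).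
  apply (Rmult_le_reg_r (L ^ 2)). exact HL2.
  unfold Rdiv. rewrite Rmult_assoc, Rinv_l by lra. rewrite Rmult_1_r, Rmult_comm. exact H.
Qed.

Lemma powerRZ_inv_sq (b : R) (k D : nat) : 0 < b -> (k <= D)%nat ->
  powerRZ b (2 * (Z.of_nat k - Z.of_nat D)) * (b ^ (D - k)) ^ 2 = 1.
Proof.
  intros Hb Hk. rewrite <- pow_mult. rewrite pow_powerRZ. rewrite <- powerRZ_add by lra.
  replace (2 * (Z.of_nat k - Z.of_nat D) + Z.of_nat ((D - k) * 2))%Z with 0%Z by lia.
  apply powerRZ_O.
Qed.

Definition wt (lam : nat -> R) (n : nat -> nat) (a b : R) (D k : nat) : R :=
  powerRZ b (2 * (Z.of_nat k - Z.of_nat D)) / (a ^ 2 * lam (n (k - 1)%nat) ^ 2).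

Lemma block_wt (lam : nat -> R) (n : nat -> nat) (a b : R) (Hlam_pos : forall i, 0 < lam i)
  (Hlam_dec : forall i, lam (S i) <= lam i) (Hb0 : 0 < b) (Ha : 1 < a) fh (Hc : cone lam n a b fh) D k :
  (1 <= k < D)%nat ->
  sigma_blk lam n fh D ^ 2 * wt lam n a b D k <= sum_n_m (fun i => fh i ^ 2) (n (k - 1)%nat) (Nat.pred (n k)).
Proof.
  intros Hk. eapply Rle_trans; [|apply block_lower; auto].
  destruct Hc as [_ Hc]. specialize (Hc k (D - k)%nat ltac:(lia) ltac:(lia)).
  replace (k + (D - k))%nat with D in Hc by lia.
  pose proof (sq_le _ _ (sigma_nonneg lam n fh D) Hc) as Hs.
  pose proof (powerRZ_inv_sq b k D Hb0 ltac:(lia)) as HP.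
  pose proof (powerRZ_le b (2 * (Z.of_nat k - Z.of_nat D)) Hb0) as HP0.
  set (P := powerRZ b (2 * (Z.of_nat k - Z.of_nat D))) in *.
  set (L := lam (n (k - 1)%nat)). pose proof (Hlam_pos (n (k-1)%nat)) as HL. fold L in HL.
  set (Q := b ^ (D - k)) in *. set (sD := sigma_blk lam n fh D) in *. set (sk := sigma_blk lam n fh k) in *.
  unfold wt. fold P. fold L.
  replace ((a * Q * sk) ^ 2) with (a ^ 2 * Q ^ 2 * sk ^ 2) in Hs by ring.
  assert (HL2 : 0 < L ^ 2) by nra. assert (Ha2 : 0 < a ^ 2) by nra.
  replace (sD ^ 2 * (P / (a ^ 2 * L ^ 2))) with ((sD ^ 2 * P) / a ^ 2 / L ^ 2) by (field; lra).
  unfold Rdiv. apply Rmult_le_compat_r. left; apply Rinv_0_lt_compat; lra.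
  apply (Rmult_le_reg_r (a ^ 2)). lra. rewrite Rmult_assoc, Rinv_l by lra. rewrite Rmult_1_r.
  apply (Rmult_le_compat_r P) in Hs; auto.
  replace (a ^ 2 * Q ^ 2 * sk ^ 2 * P) with (sk ^ 2 * a ^ 2 * (P * Q ^ 2)) in Hs by ring.
  rewrite HP in Hs. lra.
Qed.

Lemma wt_nonneg (lam : nat -> R) n a b (Hlam_pos : forall i, 0 < lam i) (Hb0 : 0 < b) (Ha : 1 < a) D k :
  0 <= wt lam n a b D k.
Proof.
  unfold wt. pose proof (Hlam_pos (n (k - 1)%nat)). apply Rmult_le_pos. apply powerRZ_le; auto.
  left. apply Rinv_0_lt_compat. apply Rmult_lt_0_compat; apply pow_lt; lra.
Qed.

Lemma lower_ind (lam : nat -> R) (n : nat -> nat) (a b : R) (Hlam_pos : forall i, 0 < lam i)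
  (Hlam_dec : forall i, lam (S i) <= lam i) (Hn : forall j, (n j < n (S j))%nat)
  (Hb0 : 0 < b) (Ha : 1 < a) fh (Hc : cone lam n a b fh) D (HD : (1 <= D)%nat) d :
  (d <= D - 1)%nat ->
  sigma_blk lam n fh D ^ 2 * sum_n_m (wt lam n a b D) 1 d + sum_n_m (fun i => fh i ^ 2) (n d) (Nat.pred (n D))
  <= sum_n_m (fun i => fh i ^ 2) (n 0%nat) (Nat.pred (n D)).
Proof.
  induction d; intros Hd.
  - rewrite sum_n_m_zero by lia. rewrite zero_R. lra.
  - pose proof (n_lt n Hn d (S d) ltac:(lia)). pose proof (n_le n Hn (S d) D ltac:(lia)).
    rewrite (sum_n_m_Chasles_R _ (n d) (Nat.pred (n (S d)))) in IHd by lia.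
    replace (S (Nat.pred (n (S d)))) with (n (S d)) in IHd by lia.
    rewrite sum_n_Sm by lia. change (@plus R_AbelianMonoid ?x ?y) with (Rplus x y).
    pose proof (block_wt lam n a b Hlam_pos Hlam_dec Hb0 Ha fh Hc D (S d) ltac:(lia)) as Hb.
    replace (S d - 1)%nat with d in Hb by lia.
    specialize (IHd ltac:(lia)). lra.
Qed.

Lemma lower_total (lam : nat -> R) (n : nat -> nat) (a b : R) (Hlam_pos : forall i, 0 < lam i)
  (Hlam_dec : forall i, lam (S i) <= lam i) (Hn : forall j, (n j < n (S j))%nat)
  (Hb0 : 0 < b) (Ha : 1 < a) fh (Hc : cone lam n a b fh) D (HD : (1 <= D)%nat) :
  sigma_blk lam n fh D ^ 2 * (sum_n_m (wt lam n a b D) 1 (D - 1) + 1 / lam (n (D - 1)%nat) ^ 2)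
  <= sum_n_m (fun i => fh i ^ 2) (n 0%nat) (Nat.pred (n D)).
Proof.
  pose proof (lower_ind lam n a b Hlam_pos Hlam_dec Hn Hb0 Ha fh Hc D HD (D - 1) ltac:(lia)).
  pose proof (block_lower lam n Hlam_pos Hlam_dec fh D).
  replace (sigma_blk lam n fh D ^ 2 * (sum_n_m (wt lam n a b D) 1 (D - 1) + 1 / lam (n (D - 1)%nat) ^ 2))
    with (sigma_blk lam n fh D ^ 2 * sum_n_m (wt lam n a b D) 1 (D - 1) + sigma_blk lam n fh D ^ 2 / lam (n (D - 1)%nat) ^ 2)
    by (unfold Rdiv; ring).
  lra.
Qed.

Lemma Series_nonneg (f : nat -> R) : (forall i, 0 <= f i) -> ex_series f -> 0 <= Series f.
Proof.
  intros H He. eapply Rle_trans; [|apply (sum_le_Series f 0); auto].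
  unfold sum_n. rewrite sum_n_n. apply H.
Qed.

Lemma lower_series (lam : nat -> R) (n : nat -> nat) (a b : R) (Hlam_pos : forall i, 0 < lam i)
  (Hlam_dec : forall i, lam (S i) <= lam i) (Hn : forall j, (n j < n (S j))%nat)
  (Hb0 : 0 < b) (Hb1 : b < 1) (Ha : 1 < a) fh (Hc : cone lam n a b fh) eps (Heps : 0 < eps)
  D (HD : (1 <= D)%nat) (Hgt : thr a b eps < sigma_blk lam n fh D) :
  eps ^ 2 * jdag_rhs lam n a b D < Series (fun i => fh i ^ 2).
Proof.
  assert (Hq : 0 < 1 - b ^ 2) by nra.
  pose proof (n_lt n Hn 0 D ltac:(lia)).
  assert (H1 : sum_n_m (fun i => fh i ^ 2) (n 0%nat) (Nat.pred (n D)) <= Series (fun i => fh i ^ 2)).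
  { eapply Rle_trans; [|apply (sum_le_Series _ (Nat.pred (n D))); [intros; apply pow2_ge_0| apply Hc]].
    unfold sum_n. destruct (n 0%nat) eqn:E0. lra.
    rewrite (sum_n_m_Chasles_R _ 0 n0 (Nat.pred (n D))) by lia.
    pose proof (sum_n_m_nonneg (fun i => fh i ^ 2) 0 n0 ltac:(intros; apply pow2_ge_0)). lra. }
  pose proof (lower_total lam n a b Hlam_pos Hlam_dec Hn Hb0 Ha fh Hc D HD) as H2.
  set (W := sum_n_m (wt lam n a b D) 1 (D - 1) + 1 / lam (n (D - 1)%nat) ^ 2) in *.
  assert (HW : 0 < W).
  { unfold W. pose proof (sum_n_m_nonneg (wt lam n a b D) 1 (D - 1) (wt_nonneg lam n a b Hlam_pos Hb0 Ha D)).
    pose proof (Hlam_pos (n (D - 1)%nat)).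
    assert (0 < 1 / lam (n (D - 1)%nat) ^ 2) by (apply Rdiv_lt_0_compat; [lra| apply pow_lt; lra]). lra. }
  assert (Hrhs : jdag_rhs lam n a b D = (1 - b ^ 2) / (a ^ 2 * b ^ 2) * W) by reflexivity.
  rewrite Hrhs.
  assert (Hthr : thr a b eps ^ 2 = eps ^ 2 * ((1 - b ^ 2) / (a ^ 2 * b ^ 2))).
  { unfold thr. replace ((eps * sqrt (1 - b ^ 2) / (a * b)) ^ 2) with (eps ^ 2 * sqrt (1 - b ^ 2) ^ 2 / (a ^ 2 * b ^ 2)) by (field; nra).
    rewrite pow2_sqrt by lra. field. nra. }
  pose proof (thr_pos a b eps Hb0 Hb1 Ha Heps).
  assert (Hs : thr a b eps ^ 2 < sigma_blk lam n fh D ^ 2) by nra.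
  rewrite <- Rmult_assoc, <- Hthr.
  apply (Rmult_lt_compat_r W) in Hs; auto. lra.
Qed.

Lemma rhs_large (lam : nat -> R) (n : nat -> nat) (a b : R) (Hlam_pos : forall i, 0 < lam i)
  (Hlam_lim : is_lim_seq lam 0) (Hn : forall j, (n j < n (S j))%nat)
  (Hb0 : 0 < b) (Hb1 : b < 1) (Ha : 1 < a) K :
  exists j, (1 <= j)%nat /\ K <= jdag_rhs lam n a b j.
Proof.
  assert (Hq : 0 < 1 - b ^ 2) by nra.
  set (c := (1 - b ^ 2) / (a ^ 2 * b ^ 2)).
  assert (Hc : 0 < c) by (unfold c; apply Rdiv_lt_0_compat; [lra | apply Rmult_lt_0_compat; apply pow_lt; lra]).
  pose proof (Rabs_pos K).
  assert (Hd : 0 < c / (Rabs K + 1 + c)) by (apply Rdiv_lt_0_compat; lra).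
  apply is_lim_seq_spec in Hlam_lim. destruct (Hlam_lim (mkposreal _ Hd)) as [N HN].
  exists (S N). split. lia.
  specialize (HN (n N) (n_ge n Hn N)). simpl in HN.
  rewrite Rminus_0_r, Rabs_right in HN by (apply Rle_ge; left; apply Hlam_pos).
  replace (S N - 1)%nat with N by lia.
  unfold jdag_rhs. fold c. clearbody c. replace (S N - 1)%nat with N by lia.
  pose proof (sum_n_m_nonneg (wt lam n a b (S N)) 1 (S N - 1) (wt_nonneg lam n a b Hlam_pos Hb0 Ha (S N))) as Hs.
  unfold wt in Hs. replace (S N - 1)%nat with N in Hs by lia.
  set (Sg := sum_n_m _ 1 N) in *. clearbody Sg.
  set (L := lam (n N)) in *. pose proof (Hlam_pos (n N)) as HL. fold L in HL. clearbody L.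
  assert (Hd1 : c / (Rabs K + 1 + c) < 1).
  { apply (Rmult_lt_reg_r (Rabs K + 1 + c)). lra. unfold Rdiv. rewrite Rmult_assoc, Rinv_l by lra. lra. }
  assert (Hd2 : c / (Rabs K + 1 + c) * (Rabs K + 1) <= c).
  { unfold Rdiv. replace (c * / (Rabs K + 1 + c) * (Rabs K + 1)) with (c * ((Rabs K + 1) / (Rabs K + 1 + c))) by (field; lra).
    assert ((Rabs K + 1) / (Rabs K + 1 + c) <= 1).
    { apply (Rmult_le_reg_r (Rabs K + 1 + c)). lra. unfold Rdiv. rewrite Rmult_assoc, Rinv_l by lra. lra. }
    nra. }
  set (dl := c / (Rabs K + 1 + c)) in *. clearbody dl.
  assert (HL2 : L ^ 2 <= dl) by nra.
  assert (HKL : K * L ^ 2 <= c).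
  { assert (K <= Rabs K) by apply Rle_abs. assert (0 < L ^ 2) by (apply pow_lt; lra). nra. }
  assert (0 < L ^ 2) by (apply pow_lt; lra).
  assert (K <= c * (1 / L ^ 2)).
  { apply (Rmult_le_reg_r (L ^ 2)); auto. unfold Rdiv. rewrite Rmult_1_l, Rmult_assoc, Rinv_l by lra. lra. }
  nra.
Qed.

Theorem theorem1 (lam : nat -> R) (n : nat -> nat) (a b : R)
  (Hlam_pos : forall i, 0 < lam i)
  (Hlam_dec : forall i, lam (S i) <= lam i)
  (Hlam_lim : is_lim_seq lam 0)
  (Hn : forall j, (n j < n (S j))%nat)
  (Hb0 : 0 < b) (Hb1 : b < 1) (Ha : 1 < a) :
  (* A~ belongs to A(C) *)
  in_alg_class lam (Atilde lam n a b) (cone lam n a b) /\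
  (* cost(A~, f, eps) = n_{j*} *)
  (forall fh, cone lam n a b fh -> forall eps, 0 < eps ->
     exists jstar : nat,
       ((1 <= jstar)%nat /\ sigma_blk lam n fh jstar <= thr a b eps /\
        forall j, (1 <= j < jstar)%nat -> thr a b eps < sigma_blk lam n fh j) /\
       exists g, halts_with (Atilde lam n a b) fh eps (n jstar) g) /\
  (* cost(A~, C, eps, rho) <= n_{j^dagger} with the bound on j^dagger *)
  (forall eps rho, 0 < eps -> 0 < rho ->
     exists jdag : nat,
       (1 <= jdag)%nat /\
       (forall fh, cone lam n a b fh -> l2norm fh <= rho ->
          forall k g, halts_with (Atilde lam n a b) fh eps k g -> (k <= n jdag)%nat) /\
       (forall j, (1 <= j)%nat ->
          rho ^ 2 / eps ^ 2 <= jdag_rhs lam n a b j -> (jdag <= j)%nat)).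
Proof.
  split; [|split].
  - intros fh Hc eps Heps.
    destruct (jstar_exists lam n a b Hb0 Hb1 Ha fh Hc eps Heps) as [J [HJ1 [HJle HJmin]]].
    exists (n J), (gout lam n fh J). split.
    + apply halts_J; auto.
    + apply (err_bound lam n a b); auto.
  - intros fh Hc eps Heps.
    destruct (jstar_exists lam n a b Hb0 Hb1 Ha fh Hc eps Heps) as [J [HJ1 [HJle HJmin]]].
    exists J. split. split; auto. exists (gout lam n fh J). apply halts_J; auto.
  - intros eps rho Heps Hrho.
    destruct (nat_min (fun j => (1 <= j)%nat /\ rho ^ 2 / eps ^ 2 <= jdag_rhs lam n a b j)
      (rhs_large lam n a b Hlam_pos Hlam_lim Hn Hb0 Hb1 Ha (rho ^ 2 / eps ^ 2))) as [jd [[Hjd1 Hjd2] Hmin]].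
    exists jd. split; auto. split.
    + intros fh Hc Hnorm k g Hh.
      destruct (jstar_exists lam n a b Hb0 Hb1 Ha fh Hc eps Heps) as [J [HJ1 [HJle HJmin]]].
      rewrite (halts_unique lam n a b Hn fh eps J HJ1 HJle HJmin k g Hh).
      apply (n_le n Hn). destruct (le_lt_dec J jd); auto. exfalso.
      pose proof (HJmin jd ltac:(lia)) as Hgt.
      pose proof (lower_series lam n a b Hlam_pos Hlam_dec Hn Hb0 Hb1 Ha fh Hc eps Heps jd Hjd1 Hgt) as Hlo.
      assert (Heps2 : 0 < eps ^ 2) by (apply pow_lt; lra).
      assert (rho ^ 2 <= eps ^ 2 * jdag_rhs lam n a b jd).
      { apply (Rmult_le_compat_l (eps ^ 2)) in Hjd2; [|lra].
        replace (eps ^ 2 * (rho ^ 2 / eps ^ 2)) with (rho ^ 2) in Hjd2 by (field; lra). exact Hjd2. }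
      unfold l2norm in Hnorm.
      pose proof (Series_nonneg (fun i => fh i ^ 2) (fun i => pow2_ge_0 (fh i)) (proj1 Hc)).
      pose proof (sq_le _ _ (sqrt_pos _) Hnorm) as Hsq. rewrite pow2_sqrt in Hsq by lra.
      lra.
    + intros j Hj Hle. apply Hmin. auto.
Qed.
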